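(* Let $d\ge 1$, $K\ge 2$. Let $\Sigma_X\in\mathbb{R}^{d\times d}$ be symmetric positive definite and $P\in\mathbb{R}^{K\times K}$ be symmetric positive definite. Let $\boldsymbol{x}\in\mathbb{R}^d$ with $\boldsymbol{x}\neq \boldsymbol{0}$, let $y\in\mathbb{R}$ and $\boldsymbol{\theta}\in\mathbb{R}^d$ with residual $r:=y-\boldsymbol{x}^\top\boldsymbol{\theta}\neq 0$. Let $\boldsymbol{\sigma}\in\mathbb{R}^K$ be a probability vector ($\sigma_k\ge 0$, $\sum_k\sigma_k=1$) and $\mathbf{e}_{c}\in\{0,1\}^K$ the one-hot vector of a class $c\in\{1,\dots,K\}$, with $\boldsymbol{\sigma}\neq\mathbf{e}_c$. Define $$\mathrm{IF}_{\mathrm{MSE}}=\Sigma_X^{-1}\boldsymbol{x}\,r\in\mathbb{R}^d,\qquad \mathrm{IF}_{\mathrm{CE}}=-(\Sigma_X\otimes P)^{-1}\big(\boldsymbol{x}\otimes(\boldsymbol{\sigma}-\mathbf{e}_c)\big)\in\mathbb{R}^{dK},$$ and $R=\|\mathrm{IF}_{\mathrm{CE}}\|_2/\|\mathrm{IF}_{\mathrm{MSE}}\|_2$. Then $$\frac{\|\boldsymbol{\sigma}-\mathbf{e}_c\|_2}{\kappa_2(\Sigma_X)\,\lambda_{\max}(P)\,|r|}\;\le\; R\;\le\;\frac{\sqrt{2}\,\kappa_2(\Sigma_X)}{\lambda_{\min}(P)\,|r|},$$ where $\kappa_2(\Sigma_X)=\|\Sigma_X\|_2\|\Sigma_X^{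-1}\|_2=\lambda_{\max}(\Sigma_X)/\lambda_{\min}(\Sigma_X)$.
   Context: $\otimes$ denotes the Kronecker product and $\|\cdot\|_2$ the Euclidean norm for vectors and the spectral norm for matrices; $\lambda_{\min},\lambda_{\max}$ denote smallest and largest eigenvalues. Interpretation in the paper: $\Sigma_X=\mathbb{E}[\boldsymbol{x}\boldsymbol{x}^\top]$ is the feature covariance (the Hessian of the squared loss $\tfrac12(y-\boldsymbol{x}^\top\boldsymbol{\theta})^2$ in a linear regression model), $\mathrm{IF}_{\mathrm{MSE}}$ is the influence function of the least-squares estimator at the sample $(\boldsymbol{x},y)$; for a $K$-class softmax linear classifier with parameters $\boldsymbol{\beta}\in\mathbb{R}^{d\times K}$, $\boldsymbol{\sigma}=\mathrm{softmax}(\boldsymbol{x}^\top\boldsymbol{\beta})$, $P$ plays the role of the (expected) softmax covariance matrix $\mathrm{diag}(\boldsymbol{\sigma})-\boldsymbol{\sigma}\boldsymbol{\sigma}^\top$, the cross-entropy Hessian is taken to be $\Sigma_X\otimes P$, and $\mathrm{IF}_{\mathrm{CE}}$ is the cross-entropy influence function at the sample with true label $c$. *)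

(* Defs.v *)
From HB Require Import structures.
From mathcomp Require Import all_boot all_order all_algebra.
From mathcomp Require Import mxtens.
From mathcomp Require Import boolp classical_sets reals.
Set Implicit Arguments. Unset Strict Implicit. Unset Printing Implicit Defensive.
Import Order.TTheory GRing.Theory Num.Theory.
Local Open Scope ring_scope.
Local Open Scope classical_set_scope.

Definition vnorm (R : realType) (n : nat) (v : 'cV[R]_n) : R :=
  Num.sqrt (\sum_(i < n) v i 0 ^+ 2).

Definition spd (R : realType) (n : nat) (A : 'M[R]_n) : Prop :=
  A^T = A /\ forall v : 'cV[R]_n, v != 0 -> 0 < (v^T *m A *m v) 0 0.

Definition lambda_max (R : realType) (n : nat) (A : 'M[R]_n) : R :=
  sup [set a : R | eigenvalue A a].
Definition lambda_min (R : realType) (n : nat) (A : 'M[R]_n) : R :=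
  inf [set a : R | eigenvalue A a].

Definition specnorm (R : realType) (n : nat) (A : 'M[R]_n) : R :=
  sup [set t : R | exists v : 'cV[R]_n, v != 0 /\ t = vnorm (A *m v) / vnorm v].

Definition kappa2 (R : realType) (n : nat) (A : 'M[R]_n) : R :=
  specnorm A * specnorm (invmx A).

(* Main.v *)
Require Import Defs.
From HB Require Import structures.
From mathcomp Require Import all_boot all_order all_algebra.
From mathcomp Require Import mxtens.
From mathcomp Require Import boolp classical_sets reals.
From mathcomp Require complex.
From mathcomp Require Import ring lra.
Import Order.TTheory GRing.Theory Num.Theory.
Local Open Scope ring_scope.

Module KeyM.
Import complex Num.Def.
Section Key.
Variable R : realType.
Local Notation C := (R[i]).
Local Notation toC := (real_complex R).

Local Open Scope sesquilinear_scope.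
Definition Nr {n} (u : 'rV[C]_n) := (u *m u^t*) 0 0.

Lemma Nsum n (u : 'rV[C]_n) : Nr u = \sum_j u 0 j * (u 0 j)^*.
Proof. by rewrite /Nr mxE; apply: eq_bigr => j _; rewrite !mxE. Qed.

Lemma NmulU n (u : 'rV[C]_n) (U : 'M[C]_n) : U \is unitarymx -> Nr (u *m U) = Nr u.
Proof.
move=> /unitarymxP Uu; rewrite /Nr trmx_mul map_mxM mulmxA -(mulmxA u) Uu.
by rewrite mulmx1.
Qed.

Lemma toCM (x y : R) : toC (x * y) = toC x * toC y.
Proof. exact: rmorphM. Qed.
Lemma toCX (x : R) k : toC (x ^+ k) = toC x ^+ k.
Proof. exact: rmorphXn. Qed.
Lemma toCsum n (F : 'I_n -> R) : toC (\sum_i F i) = \sum_i toC (F i).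
Proof. exact: rmorph_sum. Qed.

Lemma Nreal n (w : 'rV[R]_n) : Nr (map_mx toC w) = toC (\sum_j w 0 j ^+ 2).
Proof.
rewrite Nsum toCsum; apply: eq_bigr => j _; rewrite !mxE conj_Creal.
  by rewrite toCX expr2.
by apply/complex_realP; exists (w 0 j).
Qed.

Lemma key n (A : 'M[R]_n) : A^T = A ->
  exists d : 'I_n -> R, (forall i, eigenvalue A (d i)) /\
    (forall a, eigenvalue A a -> exists i, a = d i) /\
    (forall v : 'rV[R]_n, exists om : 'I_n -> R, (forall i, 0 <= om i) /\
      \sum_j v 0 j ^+ 2 = \sum_i om i /\
      \sum_j (v *m A) 0 j ^+ 2 = \sum_i d i ^+ 2 * om i).
Proof.
move=> hA.
pose Ac := map_mx toC A.
have Asym : Ac \is symmetricmx.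
  by apply/is_hermitianmxP; rewrite expr0 scale1r map_mx_id // /Ac map_trmx hA.
have Areal : Ac \is a realmx.
  by apply/mxOverP => i j; rewrite mxE; apply/complex_realP; exists (A i j).
have nA := symmetric_normalmx Asym Areal.
have /orthomx_spectralP Aeq := nA.
set U := spectralmx Ac in Aeq; set D := spectral_diag Ac in Aeq.
have Uu : U \is unitarymx := spectral_unitarymx Ac.
have Uunit : U \in unitmx := spectral_unit Ac.
have Dreal : D \is a realmx := hermitian_spectral_diag_real (realsym_hermsym Asym Areal).
have DE i : D 0 i = toC (complex.Re (D 0 i)).
  by rewrite RRe_real //; move/mxOverP: Dreal; apply.
pose d i := complex.Re (D 0 i).
have eigAc i : eigenvalue Ac (D 0 i).
  apply/eigenvalueP; exists (delta_mx 0 i *m U).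
    rewrite {1}Aeq !mulmxA mulmxK // mul_mx_diag.
    rewrite scalemxAl; congr (_ *m _); apply/matrixP => a b; rewrite !mxE.
    by case: (eqVneq b i) => [->|nb]; [rewrite mulrC | rewrite andbF mul0r mulr0].
  apply/negP => /eqP h; have := congr1 (fun M => (M *m invmx U) 0 i) h.
  rewrite /= mulmxK // mul0mx !mxE !eqxx /=.
  by move/eqP; rewrite oner_eq0.
exists d; split; [|split].
- by move=> i; rewrite -(eigenvalue_map toC); have := eigAc i; rewrite {1}DE.
- move=> a; rewrite -(eigenvalue_map toC) => /eigenvalueP [y hy y0].
  change (y *m Ac = toC a *: y) in hy.
  pose z := y *m invmx U.
  have hz : z *m diag_mx D = toC a *: z.
    have := congr1 (mulmx^~ (invmx U)) hy.
    by rewrite Aeq !mulmxA mulmxK // -scalemxAl.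
  have z0 : z != 0.
    by apply: contraNneq y0 => h; rewrite -(mulmxKV Uunit y) -/z h mul0mx.
  have [j zj] : exists j, z 0 j != 0.
    apply/existsP; apply: contraNT z0 => /existsPn h.
    by apply/eqP/rowP => j; move/negPn/eqP: (h j) => ->; rewrite mxE.
  exists j; apply: (@complexI R); rewrite -DE.
  have := congr1 (fun M : 'rV[C]_n => M 0 j) hz; rewrite mul_mx_diag [LHS]mxE [RHS]mxE => hh.
  by apply: (mulIf zj); rewrite -hh mulrC.
- move=> v; pose vc := map_mx toC v; pose z := vc *m invmx U.
  have vcE : vc = z *m U by rewrite /z mulmxKV.
  have vAE : map_mx toC (v *m A) = z *m diag_mx D *m U.
    by rewrite map_mxM -/vc -/Ac {1}Aeq vcE !mulmxA mulmxK.
  pose om i := complex.Re (z 0 i * (z 0 i)^*).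
  have omE i : z 0 i * (z 0 i)^* = toC (om i).
    by rewrite RRe_real // ger0_real // mul_conjC_ge0.
  exists om; split; [|split].
  + by move=> i; rewrite -(@ler0c R) -omE mul_conjC_ge0.
  + apply: (@complexI R); rewrite -Nreal -/vc vcE NmulU // Nsum toCsum.
    by apply: eq_bigr => i _; rewrite omE.
  + apply: (@complexI R); rewrite -Nreal vAE NmulU // Nsum toCsum.
    apply: eq_bigr => i _; rewrite mul_mx_diag [_ 0 i]mxE toCM -omE toCX.
    have dE : toC (d i) = D 0 i := esym (DE i).
    have Di : D 0 i \is Num.real by move/mxOverP: Dreal; apply.
    have cM : conjC (z 0 i * D 0 i) = conjC (z 0 i) * conjC (D 0 i) by exact: rmorphM.
    rewrite dE cM (conj_Creal Di).
    by rewrite mulrACA mulrC expr2.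
Qed.
End Key.
End KeyM.

Section Real.
Local Set Implicit Arguments.
Variable R : realType.

Lemma sumsq_ge0 n (F : 'I_n -> R) : 0 <= \sum_i F i ^+ 2.
Proof. by apply: sumr_ge0 => i _; rewrite sqr_ge0. Qed.

Lemma vnorm_ge0 n (v : 'cV[R]_n) : 0 <= vnorm v.
Proof. exact: sqrtr_ge0. Qed.

Lemma vnorm_sqr n (v : 'cV[R]_n) : vnorm v ^+ 2 = \sum_i v i 0 ^+ 2.
Proof. by rewrite /vnorm sqr_sqrtr // sumsq_ge0. Qed.

Lemma vnorm_gt0 n (v : 'cV[R]_n) : v != 0 -> 0 < vnorm v.
Proof.
move=> v0; rewrite /vnorm sqrtr_gt0 lt_def sumsq_ge0 andbT.
apply: contraNneq v0 => /eqP; rewrite psumr_eq0 => [/allP h|]; last first.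
  by move=> i _; rewrite sqr_ge0.
apply/eqP/matrixP => i j; rewrite (ord1 j) mxE.
by have /implyP := h i (mem_index_enum _); rewrite sqrf_eq0 => /(_ isT) /eqP.
Qed.

Lemma vnormN n (v : 'cV[R]_n) : vnorm (- v) = vnorm v.
Proof. by rewrite /vnorm; congr Num.sqrt; apply: eq_bigr => i _; rewrite mxE sqrrN. Qed.

Lemma vnormZ n a (v : 'cV[R]_n) : vnorm (a *: v) = `|a| * vnorm v.
Proof.
rewrite /vnorm -sqrtr_sqr -sqrtrM ?sqr_ge0 // mulr_sumr.
by congr Num.sqrt; apply: eq_bigr => i _; rewrite mxE exprMn.
Qed.

Lemma vnorm_tens m n (a : 'cV[R]_m) (b : 'cV[R]_n) :
  vnorm (a *t b : 'cV[R]_(m * n)) = vnorm a * vnorm b.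
Proof.
rewrite /vnorm -sqrtrM ?sumsq_ge0 // mulr_sum.
congr Num.sqrt; apply: eq_bigr => k _; rewrite mxE exprMn.
by rewrite !(ord1 (mxtens_unindex _).2) !(ord1 (mxtens_unindex _).1).
Qed.

Lemma spd_unit n (A : 'M[R]_n) : spd A -> A \in unitmx.
Proof.
move=> [_ hA]; rewrite unitmxE unitfE; apply/negP => /det0P [v v0 vA].
have := hA v^T; rewrite trmx_eq0 => /(_ v0); rewrite trmxK vA mul0mx mxE.
by rewrite ltxx.
Qed.

Lemma sym_col n (A : 'M[R]_n) : A^T = A ->
  exists d : 'I_n -> R, (forall i, eigenvalue A (d i)) /\
    (forall a, eigenvalue A a -> exists i, a = d i) /\
    (forall w : 'cV[R]_n, exists om : 'I_n -> R, (forall i, 0 <= om i) /\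
      vnorm w ^+ 2 = \sum_i om i /\
      vnorm (A *m w) ^+ 2 = \sum_i d i ^+ 2 * om i).
Proof.
move=> hA; have [d [h1 [h2 h3]]] := @KeyM.key R n A hA.
exists d; split => //; split => // w.
have [om [o1 [o2 o3]]] := h3 w^T; exists om; split => //; split.
  by rewrite vnorm_sqr -o2; apply: eq_bigr => i _; rewrite mxE.
rewrite vnorm_sqr -o3; apply: eq_bigr => i _.
have -> : w^T *m A = (A *m w)^T by rewrite trmx_mul hA.
by rewrite [in RHS]mxE.
Qed.

Lemma sum_le_bound n (d om : 'I_n -> R) M : (forall i, 0 <= om i) ->
  (forall i, d i ^+ 2 <= M) -> \sum_i d i ^+ 2 * om i <= M * \sum_i om i.
Proof.
move=> o0 hd; rewrite mulr_sumr; apply: ler_sum => i _.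
by apply: ler_wpM2r.
Qed.

Lemma sum_ge_bound n (d om : 'I_n -> R) m : (forall i, 0 <= om i) ->
  (forall i, m <= d i ^+ 2) -> m * \sum_i om i <= \sum_i d i ^+ 2 * om i.
Proof.
move=> o0 hd; rewrite mulr_sumr; apply: ler_sum => i _.
by apply: ler_wpM2r.
Qed.

Lemma le_sum_one n (F : 'I_n -> R) i : (forall j, 0 <= F j) -> F i <= \sum_j F j.
Proof.
move=> h; rewrite (bigD1 i) //= lerDl; apply: sumr_ge0 => j _; exact: h.
Qed.

Lemma sqr_le (x y : R) : 0 <= x -> 0 <= y -> x ^+ 2 <= y ^+ 2 -> x <= y.
Proof. move=> hx hy; rewrite -ler_sqrt ?sqr_ge0 // !sqrtr_sqr !ger0_norm //. Qed.

Lemma sym_bounded n (A : 'M[R]_n) : A^T = A ->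
  exists B, 0 <= B /\ forall w : 'cV[R]_n, vnorm (A *m w) <= B * vnorm w.
Proof.
move=> hA; have [d [_ [_ h3]]] := sym_col hA.
pose M := \sum_i d i ^+ 2.
have M0 : 0 <= M by apply: sumsq_ge0.
exists (Num.sqrt M); split; first exact: sqrtr_ge0.
move=> w; have [om [o1 [o2 o3]]] := h3 w.
apply: sqr_le; [exact: vnorm_ge0| by rewrite mulr_ge0 ?sqrtr_ge0 ?vnorm_ge0|].
rewrite o3 exprMn o2 sqr_sqrtr //; apply: sum_le_bound => // i.
by apply: (@le_sum_one _ (fun j => d j ^+ 2)) => j; rewrite sqr_ge0.
Qed.

Lemma specnorm_ge n (A : 'M[R]_n) (v : 'cV[R]_n) : A^T = A -> v != 0 ->
  vnorm (A *m v) / vnorm v <= specnorm A.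
Proof.
move=> hA v0; have [B [B0 hB]] := sym_bounded hA.
have hub : has_ubound [set t : R | exists v : 'cV[R]_n, v != 0 /\ t = vnorm (A *m v) / vnorm v].
  exists B => t [w [w0 ->]]; rewrite ler_pdivrMr ?vnorm_gt0 //; exact: hB.
by apply: (ub_le_sup hub); exists v.
Qed.

Lemma kappa_ge1 n (A : 'M[R]_n) (x : 'cV[R]_n) : spd A -> x != 0 -> 1 <= kappa2 A.
Proof.
move=> hS x0; have Au := spd_unit hS; have [hT _] := hS.
have hiT : (invmx A)^T = invmx A by rewrite trmx_inv hT.
pose w := invmx A *m x.
have w0 : w != 0.
  by apply: contraNneq x0 => h; rewrite -(mulKVmx Au x) -/w h mulmx0.
have h1 := @specnorm_ge _ _ w hT w0; rewrite /w mulKVmx // in h1.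
have h2 := @specnorm_ge _ _ x hiT x0; rewrite -/w in h2.
have nx := @vnorm_gt0 _ x x0; have nw := @vnorm_gt0 _ w w0; rewrite -/w in h1.
apply: le_trans (ler_pM _ _ h1 h2); last 2 first.
- by rewrite divr_ge0 // ltW.
- by rewrite divr_ge0 // ltW.
by rewrite mulrA divfK ?gt_eqF // divff // gt_eqF.
Qed.

Lemma spd_eig_pos n (A : 'M[R]_n) a : spd A -> eigenvalue A a -> 0 < a.
Proof.
move=> [_ hA] /eigenvalueP [y hy y0].
have yT0 : y^T != 0 by rewrite trmx_eq0.
have := hA _ yT0; rewrite trmxK hy -scalemxAl mxE.
have <- : vnorm y^T ^+ 2 = (y *m y^T) 0 0.
  by rewrite vnorm_sqr mxE; apply: eq_bigr => j _; rewrite !mxE expr2.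
by rewrite pmulr_lgt0 // exprn_gt0 // vnorm_gt0.
Qed.

Lemma lam_bounds n (A : 'M[R]_n) (c : 'I_n) : spd A ->
  0 < lambda_min A /\ 0 < lambda_max A /\
  forall w : 'cV[R]_n, lambda_min A * vnorm w <= vnorm (A *m w) /\
                       vnorm (A *m w) <= lambda_max A * vnorm w.
Proof.
move=> hS; have [hT _] := hS; have [d [h1 [h2 h3]]] := sym_col hT.
have dpos i : 0 < d i := spd_eig_pos (d i) hS (h1 i).
pose E := [set a : R | eigenvalue A a]%classic.
have hub : has_ubound E.
  exists (\sum_i `|d i|) => a /h2 [i ->].
  apply: le_trans (ler_norm _) _.
  by apply: (@le_sum_one _ (fun j => `|d j|)) => j.
have hlb : has_lbound E by exists 0 => a /h2 [i ->]; exact: ltW.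
have ne : (E !=set0)%classic by exists (d c); exact: h1.
have lmax i : d i <= lambda_max A by apply: (ub_le_sup hub); exact: h1.
have lmin i : lambda_min A <= d i by apply: (ge_inf hlb); exact: h1.
pose m := (\sum_i (d i)^-1)^-1.
have S0 : 0 < \sum_i (d i)^-1.
  apply: (lt_le_trans _ (@le_sum_one _ (fun j => (d j)^-1) c _)).
    by rewrite invr_gt0.
  by move=> j; rewrite invr_ge0 ltW.
have m0 : 0 < m by rewrite invr_gt0.
have mle : m <= lambda_min A.
  apply: lb_le_inf => // a /h2 [i ->].
  rewrite /m -[d i]invrK lef_pV2 ?posrE ?invr_gt0 //.
  by apply: (@le_sum_one _ (fun j => (d j)^-1)) => j; rewrite invr_ge0 ltW.
have lm0 : 0 < lambda_min A by apply: lt_le_trans mle.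
split => //; split; first by apply: lt_le_trans (lmax c).
move=> w; have [om [o1 [o2 o3]]] := h3 w.
have nw := vnorm_ge0 w; have nAw := vnorm_ge0 (A *m w).
split; apply: sqr_le => //.
- by rewrite mulr_ge0 // ltW.
- rewrite o3 exprMn o2; apply: sum_ge_bound => // i.
  have := lmin i; have := dpos i; nra.
- by rewrite mulr_ge0 // ltW // (lt_le_trans (dpos c) (lmax c)).
- rewrite o3 exprMn o2; apply: sum_le_bound => // i.
  have := lmax i; have := dpos i; nra.
Qed.

Lemma tens1 m n : (1%:M : 'M[R]_m) *t (1%:M : 'M[R]_n) = 1%:M.
Proof.
apply/matrixP => i j; case: (mxtens_indexP i) => i1 i2.
case: (mxtens_indexP j) => j1 j2; rewrite tensmxE !mxE -natrM mulnb.
by rewrite (inj_eq (can_inj (@mxtens_indexK _ _))) xpair_eqE.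
Qed.

Lemma tens_inv m n (A : 'M[R]_m) (B : 'M[R]_n) : A \in unitmx -> B \in unitmx ->
  invmx (A *t B) = invmx A *t invmx B.
Proof.
move=> uA uB.
have h : (invmx A *t invmx B) *m (A *t B) = 1%:M by rewrite tensmx_mul !mulVmx // tens1.
have [_ uAB] := mulmx1_unit h.
by rewrite -[RHS]mulmx1 -(mulmxV uAB) mulmxA h mul1mx.
Qed.

Lemma sqr_diff_le (s t : R) : 0 <= s -> s <= 1 -> (t = 0 \/ t = 1) ->
  (s - t) ^+ 2 <= s + t.
Proof. by move=> h0 h1 [->|->]; nra. Qed.

End Real.

Theorem mainTheorem1 (R : realType) (d K : nat) (hd : (1 <= d)%N) (hK : (2 <= K)%N)
  (SigmaX : 'M[R]_d) (P : 'M[R]_K) (hS : spd SigmaX) (hP : spd P)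
  (x : 'cV[R]_d) (hx : x != 0) (y : R) (theta : 'cV[R]_d)
  (hr : y - (x^T *m theta) 0 0 != 0)
  (sigma : 'cV[R]_K) (hsig0 : forall k : 'I_K, 0 <= sigma k 0)
  (hsig1 : \sum_(k < K) sigma k 0 = 1)
  (c : 'I_K) (hc : sigma != delta_mx c 0) :
  let r := y - (x^T *m theta) 0 0 in
  let IF_MSE : 'cV[R]_d := r *: (invmx SigmaX *m x) in
  let IF_CE : 'cV[R]_(d * K) :=
    - (invmx (SigmaX *t P) *m (x *t (sigma - delta_mx c 0) : 'cV[R]_(d * K))) in
  let ratio := vnorm IF_CE / vnorm IF_MSE in
  vnorm (sigma - delta_mx c 0) / (kappa2 SigmaX * lambda_max P * `|r|) <= ratio
  /\ ratio <= Num.sqrt 2 * kappa2 SigmaX / (lambda_min P * `|r|).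
Proof.
move=> r IF_MSE IF_CE ratio.
have Su := spd_unit hS; have Pu := spd_unit hP.
have [lm0 [lM0 hb]] := lam_bounds c hP.
have k1 := @kappa_ge1 R _ _ x hS hx.
have k0 : 0 < kappa2 SigmaX by apply: lt_le_trans k1.
set u := sigma - delta_mx c 0.
pose q := invmx P *m u.
pose s := invmx SigmaX *m x.
have s0 : s != 0.
  by apply: contraNneq hx => h; rewrite -(mulKVmx Su x) -/s h mulmx0.
have ns := @vnorm_gt0 R _ s s0.
have hr0 : 0 < `|r| by rewrite normr_gt0.
have nq := @vnorm_ge0 R _ q.
have ratioE : ratio = vnorm q / `|r|.
  rewrite /ratio /IF_CE /IF_MSE vnormN tens_inv //.
  have e : invmx SigmaX *t invmx P *m (x *t (sigma - delta_mx c 0) : 'cV[R]_(d * K))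
     = (s *t q : 'cV[R]_(d * K)).
    have := tensmx_mul (invmx SigmaX) (invmx P) x (sigma - delta_mx c 0).
    move=> h; exact h.
  rewrite e vnorm_tens vnormZ -/s -/q.
  by field; rewrite !lt0r_neq0.
have [hq1 hq2] := hb q; rewrite /q mulKVmx // -/q in hq1 hq2.
have sig1 k : sigma k 0 <= 1.
  by rewrite -hsig1; apply: (@le_sum_one R _ (fun k => sigma k 0)).
have hu2 : vnorm u ^+ 2 <= 2.
  rewrite vnorm_sqr.
  apply: (@le_trans _ _ (\sum_k (sigma k 0 + (k == c)%:R : R))).
    apply: ler_sum => k _; rewrite !mxE eqxx andbT; apply: sqr_diff_le => //.
    by case: (k == c); [right|left].
  rewrite big_split /= hsig1 (bigD1 c) //= eqxx big1 //.
    by rewrite addr0.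
  by move=> k /negPf ->.
have hu : vnorm u <= Num.sqrt 2.
  apply: sqr_le; [exact: vnorm_ge0|exact: sqrtr_ge0|].
  apply: (le_trans hu2); rewrite sqr_sqrtr //.
have sq2 : 0 <= Num.sqrt 2 :> R by exact: sqrtr_ge0.
rewrite ratioE; split.
- have den : 0 < kappa2 SigmaX * lambda_max P * `|r|.
    by apply: mulr_gt0 => //; apply: mulr_gt0.
  rewrite ler_pdivrMr //.
  have -> : vnorm q / `|r| * (kappa2 SigmaX * lambda_max P * `|r|) =
            kappa2 SigmaX * (lambda_max P * vnorm q).
    by field; rewrite lt0r_neq0.
  have := mulr_ge0 (ltW lM0) nq; nra.
- have den : 0 < lambda_min P * `|r| by apply: mulr_gt0.
  rewrite ler_pdivlMr //.
  have -> : vnorm q / `|r| * (lambda_min P * `|r|) = lambda_min P * vnorm q.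
    by field; rewrite lt0r_neq0.
  nra.
Qed.
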